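(* Let $\Phi\in\mathcal{O}(M)$, $\epsilon_0>0$, $\mathbf{Y}^{(1)},\dots,\mathbf{Y}^{(S)}\in\mathbb{R}^{M\times N}$, and $\mathbf{P}_n=\Phi(\boldsymbol{\Sigma}_{n,S}+\epsilon_0\mathbf{I})\Phi^\intercal$ for $n=1,\dots,N$. Define $$[\mathbf{G}]_{ab}=\frac1N\sum_{n=1}^N\Big(\frac{[\mathbf{P}_n]_{ab}}{[\mathbf{P}_n]_{aa}}-\delta_{ab}\Big),\qquad[\boldsymbol{\Gamma}]_{ab}=\frac1N\sum_{n=1}^N\frac{[\mathbf{P}_n]_{bb}}{[\mathbf{P}_n]_{aa}},$$ and the tensor $[\tilde{\mathcal{H}}]_{abcd}=\delta_{ac}\delta_{bd}[\boldsymbol{\Gamma}]_{ab}+\delta_{ad}\delta_{bc}-2\delta_{abcd}$. Then the matrix $\mathbf{E}$ defined by $[\mathbf{E}]_{ab}=-[\mathbf{G}^{(\mathrm{anti})}]_{ab}/([\boldsymbol{\Gamma}^{(\mathrm{sym})}]_{ab}-1)$ if $[\boldsymbol{\Gamma}^{(\mathrm{sym})}]_{ab}\neq1$ and $[\mathbf{E}]_{ab}=0$ otherwise belongs to $\Upsilon$ and is a solution of $$\min_{\mathbf{E}\in\Upsilon}\ \langle\mathbf{G},\mathbf{E}\rangle+\tfrac12\langle\mathbf{E}|\tilde{\mathcal{H}}|\mathbf{E}\rangle.$$ Moreover, if $\mathbf{G}^{(\mathrm{anti})}\neq\mathbf{0}$ then $\langle\mathbf{G},\mathbf{E}\rangl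e<0$.
   Context: $\mathcal{O}(M)$ is the group of real $M\times M$ orthogonal matrices; $\Upsilon=\{\mathbf{E}\in\mathbb{R}^{M\times M}:\mathbf{E}^\intercal=-\mathbf{E}\}$. $\boldsymbol{\Sigma}_{n,S}=\frac1S\sum_{s=1}^S\mathbf{y}_n^{(s)}(\mathbf{y}_n^{(s)})^\intercal$, where $\mathbf{y}_n^{(s)}$ is the $n$-th column of $\mathbf{Y}^{(s)}$. $\delta_{ab}$ is the Kronecker delta and $\delta_{abcd}=1$ if $a=b=c=d$, $0$ otherwise. $\langle\mathbf{G},\mathbf{E}\rangle=\sum_{a,b}[\mathbf{G}]_{ab}[\mathbf{E}]_{ab}$, $\langle\mathbf{E}|\tilde{\mathcal{H}}|\mathbf{E}\rangle=\sum_{a,b,c,d}[\tilde{\mathcal{H}}]_{abcd}[\mathbf{E}]_{ab}[\mathbf{E}]_{cd}$. $\mathbf{G}^{(\mathrm{anti})}=(\mathbf{G}-\mathbf{G}^\intercal)/2$ and $\boldsymbol{\Gamma}^{(\mathrm{sym})}=(\boldsymbol{\Gamma}+\boldsymbol{\Gamma}^\intercal)/2$. *)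

(* Defs.v *)
From mathcomp Require Import all_boot all_order all_algebra.
Set Implicit Arguments. Unset Strict Implicit. Unset Printing Implicit Defensive.
Import Order.TTheory GRing.Theory Num.Theory.
Local Open Scope ring_scope.

Section Defs.
Variable R : realFieldType.

Definition kd {M : nat} (a b : 'I_M) : R := (a == b)%:R.
Definition kd4 {M : nat} (a b c d : 'I_M) : R :=
  [&& a == b, b == c & c == d]%:R.

Definition orthogonal_mx (M : nat) (Phi : 'M[R]_M) : Prop :=
  Phi^T *m Phi = 1%:M.

(* Upsilon: skew-symmetric matrices *)
Definition skew_mx (M : nat) (E : 'M[R]_M) : Prop := E^T = - E.

Definition Sigma_nS (M N S : nat) (Y : 'I_S -> 'M[R]_(M, N)) (n : 'I_N)
  : 'M[R]_M :=
  (S%:R)^-1 *: \sum_(s < S) (col n (Y s) *m (col n (Y s))^T).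

Definition Pn (M N S : nat) (Phi : 'M[R]_M) (eps0 : R)
  (Y : 'I_S -> 'M[R]_(M, N)) (n : 'I_N) : 'M[R]_M :=
  Phi *m (Sigma_nS Y n + eps0%:M) *m Phi^T.

Definition Gmx (M N : nat) (P : 'I_N -> 'M[R]_M) : 'M[R]_M :=
  \matrix_(a, b) ((N%:R)^-1 * \sum_(n < N) (P n a b / P n a a - kd a b)).

Definition Gammamx (M N : nat) (P : 'I_N -> 'M[R]_M) : 'M[R]_M :=
  \matrix_(a, b) ((N%:R)^-1 * \sum_(n < N) (P n b b / P n a a)).

Definition Htilde (M : nat) (Gamma : 'M[R]_M) (a b c d : 'I_M) : R :=
  kd a c * kd b d * Gamma a b + kd a d * kd b c - 2 * kd4 a b c d.

Definition anti_part (M : nat) (A : 'M[R]_M) : 'M[R]_M := (2%:R)^-1 *: (A - A^T).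
Definition sym_part (M : nat) (A : 'M[R]_M) : 'M[R]_M := (2%:R)^-1 *: (A + A^T).

Definition frob (M : nat) (A B : 'M[R]_M) : R := \sum_(a < M) \sum_(b < M) A a b * B a b.

Definition quad4 (M : nat) (H : 'I_M -> 'I_M -> 'I_M -> 'I_M -> R) (E : 'M[R]_M) : R :=
  \sum_(a < M) \sum_(b < M) \sum_(c < M) \sum_(d < M) H a b c d * E a b * E c d.

Definition objective (M : nat) (G Gamma E : 'M[R]_M) : R :=
  frob G E + (2%:R)^-1 * quad4 (Htilde Gamma) E.

Definition Esol (M : nat) (G Gamma : 'M[R]_M) : 'M[R]_M :=
  \matrix_(a, b) (if sym_part Gamma a b != 1
                  then - anti_part G a b / (sym_part Gamma a b - 1) else 0).

End Defs.

(* Main.v *)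
Require Import Defs.
From mathcomp Require Import all_boot all_order all_algebra.
From mathcomp Require Import ring lra.
Import Order.TTheory GRing.Theory Num.Theory.
Set Implicit Arguments. Unset Strict Implicit.
Local Open Scope ring_scope.

Section Core.
Variable R : realFieldType.
Variable M : nat.
Implicit Types (G Gm E : 'M[R]_M).

Lemma sum_kd (f : 'I_M -> R) (a : 'I_M) : \sum_c kd R a c * f c = f a.
Proof.
rewrite (bigD1 a) //= big1 => [|c /negbTE ne]; first by rewrite /kd eqxx mul1r addr0.
by rewrite /kd eq_sym ne mul0r.
Qed.

Lemma skewE E : skew_mx E -> forall a b, E b a = - E a b.
Proof. move=> hE a b; have := congr1 (fun A : 'M[R]_M => A a b) hE; by rewrite !mxE. Qed.

Lemma skew0 E : skew_mx E -> forall a, E a a = 0.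
Proof. move=> hE a; have := skewE hE a a => h. lra. Qed.

Lemma spE Gm a b : sym_part Gm a b = 2^-1 * (Gm a b + Gm b a).
Proof. by rewrite /sym_part !mxE. Qed.
Lemma apE G a b : anti_part G a b = 2^-1 * (G a b - G b a).
Proof. by rewrite /anti_part !mxE. Qed.

Lemma Esol_skew G Gm : skew_mx (Esol G Gm).
Proof.
apply/matrixP => a b; rewrite !mxE (addrC (Gm b a)).
case: ifP => _; last by rewrite oppr0.
rewrite !mulNr opprK -mulNr; congr (_ * _); ring.
Qed.

Lemma frob_skew G E : skew_mx E ->
  frob G E = \sum_a \sum_b anti_part G a b * E a b.
Proof.
move=> hE.
have -> : \sum_a \sum_b anti_part G a b * E a b =
   2^-1 * (\sum_a \sum_b G a b * E a b) - 2^-1 * (\sum_a \sum_b G b a * E a b).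
  rewrite !mulr_sumr -sumrB; apply eq_bigr => a _.
  rewrite !mulr_sumr -sumrB; apply eq_bigr => b _; rewrite apE; ring.
rewrite [X in _ - 2^-1 * X]exchange_big /=.
have -> : \sum_j \sum_i G j i * E i j = - \sum_j \sum_i G j i * E j i.
  rewrite -sumrN; apply eq_bigr => a _; rewrite -sumrN; apply eq_bigr => b _.
  by rewrite (skewE hE) mulrN.
rewrite /frob mulrN opprK.
have e : forall x y : R, x = y -> x = 2^-1 * x + 2^-1 * y.
  by move=> x y ->; field.
by apply: e.
Qed.

Lemma quad_skew Gm E : skew_mx E ->
  quad4 (Htilde Gm) E = \sum_a \sum_b (Gm a b * E a b ^+ 2 + E a b * E b a).
Proof.
move=> hE; rewrite /quad4; apply eq_bigr => a _; apply eq_bigr => b _.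
have h4 : forall c d, kd4 R a b c d * E c d = 0.
  move=> c d; rewrite /kd4; case: (eqVneq c d) => [->|ne].
    by rewrite skew0 // mulr0.
  by rewrite !andbF mul0r.
transitivity (\sum_c \sum_d (kd R a c * (kd R b d * (Gm a b * E a b * E c d))
                          + kd R b c * (kd R a d * (E a b * E c d)))).
  apply eq_bigr => c _; apply eq_bigr => d _.
  have := h4 c d; rewrite /Htilde => h.
  transitivity (kd R a c * (kd R b d * (Gm a b * E a b * E c d))
     + kd R b c * (kd R a d * (E a b * E c d)) - 2 * E a b * (kd4 R a b c d * E c d)).
    ring.
  by rewrite h mulr0 subr0.
under eq_bigr do rewrite big_split /= -!mulr_sumr !sum_kd.
by rewrite big_split /= !sum_kd expr2; ring.
Qed.


Lemma sum_sym (F : 'I_M -> 'I_M -> R) :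
  (forall a b, F b a = F a b) -> forall Gm : 'M[R]_M,
  \sum_a \sum_b Gm b a * F a b = \sum_a \sum_b Gm a b * F a b.
Proof.
move=> hF Gm; rewrite exchange_big /=; apply eq_bigr => a _; apply eq_bigr => b _.
by rewrite hF.
Qed.

Lemma objective_skew G Gm E : skew_mx E -> objective G Gm E =
  \sum_a \sum_b (anti_part G a b * E a b + 2^-1 * ((sym_part Gm a b - 1) * E a b ^+ 2)).
Proof.
move=> hE; rewrite /objective frob_skew // quad_skew //.
have -> : \sum_a \sum_b (Gm a b * E a b ^+ 2 + E a b * E b a) =
          \sum_a \sum_b ((sym_part Gm a b - 1) * E a b ^+ 2).
  have h1 : \sum_a \sum_b (Gm a b * E a b ^+ 2 + E a b * E b a) =
     \sum_a \sum_b Gm a b * E a b ^+ 2 - \sum_a \sum_b E a b ^+ 2.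
    rewrite -sumrB; apply eq_bigr => a _; rewrite -sumrB; apply eq_bigr => b _.
    by rewrite (skewE hE a b) mulrN expr2.
  have h2 : \sum_a \sum_b ((sym_part Gm a b - 1) * E a b ^+ 2) =
     2^-1 * (\sum_a \sum_b Gm a b * E a b ^+ 2) +
     2^-1 * (\sum_a \sum_b Gm b a * E a b ^+ 2) - \sum_a \sum_b E a b ^+ 2.
    rewrite !mulr_sumr -big_split -sumrB; apply eq_bigr => a _.
    rewrite !mulr_sumr -big_split -sumrB; apply eq_bigr => b _.
    rewrite spE /=; ring.
  rewrite h1 h2 sum_sym; last by move=> a b; rewrite (skewE hE) sqrrN.
  set X := \sum_a \sum_b _; set Y := \sum_a \sum_b _.
  have e : forall x y : R, x = 2^-1 * x + 2^-1 * x - y + y by move=> x y; field.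
  by rewrite {1}(e X Y) addrNK.
rewrite mulr_sumr -big_split; apply eq_bigr => a _.
by rewrite mulr_sumr -big_split.
Qed.

Lemma entry_le (g s x e : R) : 1 <= s -> (s = 1 -> g = 0) ->
  e = (if s != 1 then - g / (s - 1) else 0) ->
  g * e + 2^-1 * ((s - 1) * e ^+ 2) <= g * x + 2^-1 * ((s - 1) * x ^+ 2).
Proof.
move=> h1 h2 ->; case: eqP => [hs | ne] /=.
  by rewrite (h2 hs) hs subrr !(mul0r, mulr0, addr0).
have hc : 0 < s - 1 by rewrite subr_gt0 lt_neqAle eq_sym; apply/andP; split=> //; apply/eqP.
set c := s - 1 in hc *.
have hg : g = - (c * (- g / c)) by field; rewrite gt_eqF.
set f := - g / c in hg *.
rewrite hg.
have h: 0 <= c * (x-f)^+2 by apply mulr_ge0; [exact: ltW| exact: sqr_ge0].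
nra.
Qed.

Lemma core G Gm : (forall a b, 1 <= sym_part Gm a b) ->
  (forall a b, sym_part Gm a b = 1 -> anti_part G a b = 0) ->
  let E := Esol G Gm in
  [/\ skew_mx E,
      (forall E' : 'M[R]_M, skew_mx E' -> objective G Gm E <= objective G Gm E')
    & anti_part G != 0 -> frob G E < 0].
Proof.
move=> h1 h2 E; have sk : skew_mx E by exact: Esol_skew.
split=> //.
  move=> E' sk'; rewrite !objective_skew //.
  apply ler_sum => a _; apply ler_sum => b _.
  apply: entry_le; [exact: h1 | exact: h2 | by rewrite /E [LHS]mxE].
have hterm : forall a b, anti_part G a b * E a b =
    if sym_part Gm a b != 1 then - (anti_part G a b ^+ 2 / (sym_part Gm a b - 1)) else 0.
  move=> a b; rewrite /E [Esol _ _ _ _]mxE; case: ifP => _; last by rewrite mulr0.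
  by rewrite mulrA mulrN -expr2 mulNr.
have hle : forall a b, anti_part G a b * E a b <= 0.
  move=> a b; rewrite hterm; case: ifP => // ne.
  rewrite oppr_le0; apply divr_ge0; first exact: sqr_ge0.
  by rewrite subr_ge0.
move=> nz; rewrite frob_skew //.
have [a [b hab]] : exists a b, anti_part G a b != 0.
  case: (pickP (fun p : 'I_M * 'I_M => anti_part G p.1 p.2 != 0)) => [[a b] hab|H].
    by exists a, b.
  move/eqP: nz; case; apply/matrixP => a b; have := H (a, b).
  by rewrite /= => /negbFE/eqP ->; rewrite [RHS]mxE.
have ht : anti_part G a b * E a b < 0.
  rewrite hterm; case: ifP => ne.
    rewrite oppr_lt0; apply divr_gt0; first by rewrite exprn_even_gt0.
    by rewrite subr_gt0 lt_neqAle eq_sym ne h1.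
  by move/negbFE/eqP/h2: ne => h; rewrite h eqxx in hab.
rewrite (bigD1 a) //= (bigD1 b) //=.
have hy : \sum_(i < M | i != b) anti_part G a i * E a i <= 0 by apply: sumr_le0.
have hz : \sum_(i < M | i != a) \sum_(j < M) anti_part G i j * E i j <= 0.
  by apply: sumr_le0 => i _; apply: sumr_le0.
lra.
Qed.

End Core.
Section Conc.
Variable R : realFieldType.
Variables M N : nat.
Variable P : 'I_N -> 'M[R]_M.
Hypothesis hN : (0 < N)%N.
Hypothesis hsym : forall n a b, P n b a = P n a b.
Hypothesis hpos : forall n a, 0 < P n a a.

Let t a b n := 2^-1 * (P n b b / P n a a + P n a a / P n b b) - 1.

Lemma tE a b n : t a b n = (P n a a - P n b b) ^+ 2 / (2 * (P n a a * P n b b)).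
Proof.
have ha := hpos n a; have hb := hpos n b.
by rewrite /t; field; rewrite ?(gt_eqF ha, gt_eqF hb) //.
Qed.

Lemma t_ge0 a b n : 0 <= t a b n.
Proof.
rewrite tE; apply divr_ge0; first exact: sqr_ge0.
by rewrite mulr_ge0 // mulr_ge0 // ltW.
Qed.

Lemma t_eq0 a b n : t a b n = 0 -> P n a a = P n b b.
Proof.
rewrite tE => /eqP; rewrite mulf_eq0 invr_eq0 => /orP [|].
  by rewrite sqrf_eq0 subr_eq0 => /eqP.
by rewrite mulf_eq0 pnatr_eq0 /= mulf_eq0 !gt_eqF ?hpos.
Qed.

Lemma GsE a b : sym_part (Gammamx P) a b - 1 = N%:R^-1 * \sum_n t a b n.
Proof.
have hN0 : N%:R != 0 :> R by rewrite pnatr_eq0 -lt0n.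
rewrite /sym_part !mxE /t sumrB -mulr_sumr big_split /= sumr_const card_ord.
field; by rewrite pnatr_eq0 -lt0n.
Qed.

Lemma Gs_ge1 a b : 1 <= sym_part (Gammamx P) a b.
Proof.
rewrite -subr_ge0 GsE; apply mulr_ge0; first by rewrite invr_ge0 ler0n.
by apply sumr_ge0 => n _; exact: t_ge0.
Qed.

Lemma Gs1 a b : sym_part (Gammamx P) a b = 1 -> anti_part (Gmx P) a b = 0.
Proof.
move=> h; have : N%:R^-1 * \sum_n t a b n = 0 by rewrite -GsE h subrr.
move/eqP; rewrite mulf_eq0 invr_eq0 pnatr_eq0 (gtn_eqF hN) /= => /eqP hs.
have heq n : P n a a = P n b b.
  by apply: t_eq0; apply: (psumr_eq0P _ hs) => // i _; exact: t_ge0.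
rewrite /anti_part !mxE.
have -> : \sum_n (P n b a / P n b b - kd R b a) = \sum_n (P n a b / P n a a - kd R a b).
  by apply eq_bigr => n _; rewrite hsym heq /kd eq_sym.
by rewrite subrr mulr0.
Qed.
End Conc.
Section Pp.
Variable R : realFieldType.
Variables M N S : nat.
Variables (Phi : 'M[R]_M) (eps0 : R) (Y : 'I_S -> 'M[R]_(M, N)).
Hypothesis hO : orthogonal_mx Phi.
Hypothesis he : 0 < eps0.

Lemma uuT_ge0 (u : 'M[R]_(M, 1)) a : 0 <= (u *m u^T) a a.
Proof. rewrite mxE; apply sumr_ge0 => j _; by rewrite mxE -expr2 sqr_ge0. Qed.

Lemma PnE n : Pn Phi eps0 Y n =
  S%:R^-1 *: \sum_s ((Phi *m col n (Y s)) *m (Phi *m col n (Y s))^T) + eps0%:M.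
Proof.
rewrite /Pn mulmxDr mulmxDl; congr (_ + _).
  rewrite /Sigma_nS -scalemxAr -scalemxAl mulmx_sumr mulmx_suml; congr (_ *: _).
  by apply eq_bigr => s _; rewrite trmx_mul !mulmxA.
have h1 : Phi *m Phi^T = 1%:M by apply: mulmx1C; exact: hO.
by rewrite mul_mx_scalar -scalemxAl h1 scalemx1.
Qed.

Lemma Pn_pos n a : 0 < Pn Phi eps0 Y n a a.
Proof.
rewrite PnE mxE [X in _ + X]mxE eqxx mulr1n mxE summxE.
have : 0 <= S%:R^-1 * \sum_s ((Phi *m col n (Y s)) *m (Phi *m col n (Y s))^T) a a.
  apply mulr_ge0; first by rewrite invr_ge0 ler0n.
  by apply sumr_ge0 => s _; exact: uuT_ge0.
move=> h; apply: (le_lt_trans h); by rewrite ltrDl.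
Qed.

Lemma Pn_sym n a b : Pn Phi eps0 Y n b a = Pn Phi eps0 Y n a b.
Proof.
have : (Pn Phi eps0 Y n)^T = Pn Phi eps0 Y n.
  rewrite PnE linearD /= linearZ /= tr_scalar_mx linear_sum /=.
  by congr (_ *: _ + _); apply eq_bigr => s _; rewrite trmx_mul trmxK.
by move/(congr1 (fun A : 'M[R]_M => A a b)); rewrite mxE.
Qed.
End Pp.

Theorem proposition4 (R : realFieldType) (M N S : nat)
  (Phi : 'M[R]_M) (eps0 : R) (Y : 'I_S -> 'M[R]_(M, N)) :
  (0 < N)%N -> (0 < S)%N ->
  orthogonal_mx Phi -> 0 < eps0 ->
  let P := Pn Phi eps0 Y in
  let G := Gmx P in
  let Gamma := Gammamx P in
  let E := Esol G Gamma in
  [/\ skew_mx E,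
      (forall E' : 'M[R]_M, skew_mx E' -> objective G Gamma E <= objective G Gamma E')
    & anti_part G != 0 -> frob G E < 0].
Proof.
move=> hN hS hO he P G Gamma E.
have hsym : forall n a b, P n b a = P n a b by move=> n a b; exact: Pn_sym.
have hpos : forall n a, 0 < P n a a by move=> n a; exact: Pn_pos.
apply: core.
  by move=> a b; apply: Gs_ge1.
by move=> a b; apply: Gs1.
Qed.
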